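(* Let $\{|1\rangle,|2\rangle,|3\rangle\}$ be the standard basis of $\mathbb{C}^3$. For $i\in\{1,2,3\}$ let $X^{(i)},Y^{(i)},Z^{(i)}$ be the operators on $\mathbb{C}^3$ acting as the Pauli matrices $X,Y,Z$ on the two-dimensional subspace spanned by $\{|k\rangle:k\neq i\}$ (with respect to the two remaining basis vectors in increasing order) and as $0$ on $|i\rangle$. Then every separable state $\rho$ on $\mathbb{C}^3\otimes\mathbb{C}^3$ satisfies $$\sum_{i,j=1}^3\Big(|\operatorname{tr}(\rho\,X^{(i)}\otimes X^{(j)})|+|\operatorname{tr}(\rho\,Y^{(i)}\otimes Y^{(j)})|+|\operatorname{tr}(\rho\,Z^{(i)}\otimes Z^{(j)})|\Big)\le4.$$
   Context: A state on $\mathbb{C}^3\otimes\mathbb{C}^3$ is separable if it is a convex combination of product states $\rho_A\otimes\rho_B$. *)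

(* Defs.v *)
(* Complex scalars: an arbitrary numClosedFieldType C
   (e.g. C = R[i] for a real closed field R; covers the usual complex numbers). *)
From mathcomp Require Import all_boot all_order all_algebra.
From mathcomp Require Import mxtens.
Set Implicit Arguments. Unset Strict Implicit. Unset Printing Implicit Defensive.
Import Order.TTheory GRing.Theory Num.Theory.
Local Open Scope ring_scope.

Section QDefs.
Variable C : numClosedFieldType.

Definition adjmx {m n} (A : 'M[C]_(m, n)) : 'M[C]_(n, m) := (map_mx Num.conj A)^T.

(* positive semidefinite: <v, A v> >= 0 for all v (this forces A Hermitian over C) *)
Definition psd {n} (A : 'M[C]_n) : Prop :=
  forall v : 'cV[C]_n, 0 <= (adjmx v *m A *m v) 0 0.

Definition is_state {n} (rho : 'M[C]_n) : Prop := psd rho /\ \tr rho = 1.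

Definition separable {m n} (rho : 'M[C]_(m * n)) : Prop :=
  exists (N : nat) (p : 'I_N -> C) (rA : 'I_N -> 'M[C]_m) (rB : 'I_N -> 'M[C]_n),
    (forall k, 0 <= p k) /\ \sum_(k < N) p k = 1 /\
    (forall k, is_state (rA k)) /\ (forall k, is_state (rB k)) /\
    rho = \sum_(k < N) p k *: tensmx (rA k) (rB k).

Definition pauliX : 'M[C]_2 := \matrix_(r, c) (if r == c then 0 else 1).
Definition pauliY : 'M[C]_2 :=
  \matrix_(r, c) (if r == c then 0 else if (r == 0 :> nat) then - 'i else 'i).
Definition pauliZ : 'M[C]_2 :=
  \matrix_(r, c) (if r == c then (if (r == 0 :> nat) then 1 else -1) else 0).

(* Basis indices are 0,1,2 (paper's 1,2,3). The position of k <> i among the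
   remaining two indices is k - (i < k). *)
Definition embed (i : 'I_3) (P : 'M[C]_2) : 'M[C]_3 :=
  \matrix_(r, c) (if (r == i) || (c == i) then 0
                  else P (inord (r - (i < r))) (inord (c - (i < c)))).

Definition Xop i := embed i pauliX.
Definition Yop i := embed i pauliY.
Definition Zop i := embed i pauliZ.

End QDefs.

(* Main.v *)
Require Import Defs.
From mathcomp Require Import all_boot all_order all_algebra.
From mathcomp Require Import mxtens ring lra.
Import Order.TTheory GRing.Theory Num.Theory.
Local Open Scope ring_scope.
Section S.
Variable C : numClosedFieldType.
Definition o0 : 'I_3 := @Ordinal 3 0 isT.
Definition o1 : 'I_3 := @Ordinal 3 1 isT.
Definition o2 : 'I_3 := @Ordinal 3 2 isT.

Lemma tr3 (M N : 'M[C]_3) : \tr (M *m N) =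
  M o0 o0 * N o0 o0 + M o0 o1 * N o1 o0 + M o0 o2 * N o2 o0 +
  (M o1 o0 * N o0 o1 + M o1 o1 * N o1 o1 + M o1 o2 * N o2 o1) +
  (M o2 o0 * N o0 o2 + M o2 o1 * N o1 o2 + M o2 o2 * N o2 o2).
Proof.
rewrite /mxtrace !big_ord_recr big_ord0 /= !mxE !big_ord_recr big_ord0 /= add0r.
rewrite !big_ord0 !add0r.
have -> : (widen_ord (leqnSn 2) (widen_ord (leqnSn 1) ord_max)) = o0 by apply: val_inj.
have -> : (widen_ord (leqnSn 2) ord_max) = o1 by apply: val_inj.
have -> : (@ord_max 2) = o2 by apply: val_inj.
done.
Qed.

Ltac trsimp := rewrite tr3 /Xop /Yop /Zop /embed /pauliX /pauliY /pauliZ !mxE /= -?val_eqE /= ?inordK //= ?mulr0 ?mulr1 ?add0r ?addr0 ?mulrN1; try ring.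
Lemma trX0 (M : 'M[C]_3) : \tr (M *m Xop C o0) = M o1 o2 + M o2 o1.
Proof. trsimp. Qed.
Lemma trX1 (M : 'M[C]_3) : \tr (M *m Xop C o1) = M o0 o2 + M o2 o0.
Proof. trsimp. Qed.
Lemma trX2 (M : 'M[C]_3) : \tr (M *m Xop C o2) = M o0 o1 + M o1 o0.
Proof. trsimp. Qed.
Lemma trY0 (M : 'M[C]_3) : \tr (M *m Yop C o0) = 'i * M o1 o2 - 'i * M o2 o1.
Proof. trsimp. Qed.
Lemma trY1 (M : 'M[C]_3) : \tr (M *m Yop C o1) = 'i * M o0 o2 - 'i * M o2 o0.
Proof. trsimp. Qed.
Lemma trY2 (M : 'M[C]_3) : \tr (M *m Yop C o2) = 'i * M o0 o1 - 'i * M o1 o0.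
Proof. trsimp. Qed.
Lemma trZ0 (M : 'M[C]_3) : \tr (M *m Zop C o0) = M o1 o1 - M o2 o2.
Proof. trsimp. Qed.
Lemma trZ1 (M : 'M[C]_3) : \tr (M *m Zop C o1) = M o0 o0 - M o2 o2.
Proof. trsimp. Qed.
Lemma trZ2 (M : 'M[C]_3) : \tr (M *m Zop C o2) = M o0 o0 - M o1 o1.
Proof. trsimp. Qed.

Definition v2 (j k : 'I_3) (x y : C) : 'cV[C]_3 :=
  \col_a (if a == j then x else if a == k then y else 0).

Lemma quad3 (A : 'M[C]_3) (v : 'cV[C]_3) : (adjmx v *m A *m v) 0 0 =
  \sum_(b < 3) (\sum_(a < 3) (v a 0)^* * A a b) * v b 0.
Proof. by rewrite !mxE; apply: eq_bigr => b _; rewrite !mxE; congr (_ * _); apply: eq_bigr => a _; rewrite !mxE. Qed.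

Lemma sum3 (F : 'I_3 -> C) : \sum_(i < 3) F i = F o0 + F o1 + F o2.
Proof.
rewrite !big_ord_recr big_ord0 /= add0r.
have -> : (widen_ord (leqnSn 2) (widen_ord (leqnSn 1) ord_max)) = o0 by apply: val_inj.
have -> : (widen_ord (leqnSn 2) ord_max) = o1 by apply: val_inj.
by have -> : (@ord_max 2) = o2 by apply: val_inj.
Qed.

Ltac psd2tac j k := move=> /(_ (v2 j k x y)); rewrite quad3 !sum3 /v2 !mxE /=;
 rewrite ?conjC0 ?mul0r ?mulr0 ?add0r ?addr0;
 move/le_trans; apply; rewrite le_eqVlt; apply/orP; left; apply/eqP; ring.

Lemma psd01 (A : 'M[C]_3) x y : psd A ->
  0 <= x^* * x * A o0 o0 + x^* * y * A o0 o1 + y^* * x * A o1 o0 + y^* * y * A o1 o1.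
Proof. psd2tac o0 o1. Qed.
Lemma psd02 (A : 'M[C]_3) x y : psd A ->
  0 <= x^* * x * A o0 o0 + x^* * y * A o0 o2 + y^* * x * A o2 o0 + y^* * y * A o2 o2.
Proof. psd2tac o0 o2. Qed.
Lemma psd12 (A : 'M[C]_3) x y : psd A ->
  0 <= x^* * x * A o1 o1 + x^* * y * A o1 o2 + y^* * x * A o2 o1 + y^* * y * A o2 o2.
Proof. psd2tac o1 o2. Qed.
Lemma le_eq {x y : C} : 0 <= x -> x = y -> 0 <= y.
Proof. by move=> h <-. Qed.
Lemma eq_i {l r : C} k : l - r = ('i * 'i + 1) * k -> l = r.
Proof. by rewrite mulCii addNr mul0r => /eqP; rewrite subr_eq0 => /eqP. Qed.
Lemma realC {x : C} : 0 <= x -> x^* = x.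
Proof. by move=> h; apply: conj_Creal; apply: ger0_real. Qed.

Lemma herm2 (a d p q : C) :
  (forall x y, 0 <= x^* * x * a + x^* * y * p + y^* * x * q + y^* * y * d) ->
  [/\ 0 <= a, 0 <= d, q = p^* & p * p^* <= a * d].
Proof.
move=> H.
have ha : 0 <= a by apply: (le_eq (H 1 0) _); rewrite conjC1 conjC0; ring.
have hd : 0 <= d by apply: (le_eq (H 0 1) _); rewrite conjC1 conjC0; ring.
have h1 : 0 <= a + p + q + d by apply: (le_eq (H 1 1) _); rewrite conjC1; ring.
have h2 : 0 <= a + d + 'i * (p - q).
  apply: (le_eq (H 1 'i) _); rewrite conjC1 conjCi.
  by apply: (eq_i (- d)); ring.
have E1 := realC h1; have E2 := realC h2.
rewrite !rmorphD /= (realC ha) (realC hd) in E1.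
rewrite !rmorphD rmorphM rmorphB /= conjCi (realC ha) (realC hd) in E2.
have hq : q = p^*.
  have : 2 * (q - p^*) = 0.
    have -> : 2 * (q - p^*) = ((a + p + q + d) - (a + p^* + q^* + d))
       + 'i * ((a + d + 'i * (p - q)) - (a + d + - 'i * (p^* - q^*)))
       - ('i * 'i + 1) * (p - q + p^* - q^*) by ring.
    by rewrite E1 E2 mulCii addNr mul0r subr0 subrr add0r subrr mulr0.
  move/eqP; rewrite mulf_eq0 pnatr_eq0 /= subr_eq0 => /eqP; done.
subst q.
set N := p * p^*.
have hN : 0 <= N := mul_conjC_ge0 p.
split => //.
have [d0|dn0] := eqVneq d 0.
  subst d; rewrite mulr0.
  have h3 := H N (- (a + 1) * p^*).
  rewrite (realC hN) !rmorphM !rmorphN /= conjCK (realC (addr_ge0 ha ler01)) in h3.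
  have : 0 <= - (N * N) * (a + 2).
    by apply: (le_eq h3); rewrite /N; ring.
  rewrite mulNr oppr_ge0 pmulr_lle0; last by apply: (lt_le_trans (ltr0Sn _ 1)); rewrite lerDr.
  rewrite -expr2 => hN2.
  have : N ^+ 2 == 0 by rewrite eq_le hN2 exprn_ge0.
  by rewrite expf_eq0 /= => /eqP ->.
have dpos : 0 < d by rewrite lt_def dn0 hd.
have h3 := H d (- p^*).
rewrite (realC hd) !rmorphN /= conjCK in h3.
have : 0 <= d * (a * d - N) by apply: (le_eq h3); rewrite /N; ring.
by rewrite pmulr_rge0 // subr_ge0.
Qed.
Definition Pz (a b c : C) := 4 * (a*b+a*c+b*c)^+2 + (`|a^+2-b^+2| + `|a^+2-c^+2| + `|b^+2-c^+2|)^+2 <= 4 * (a^+2+b^+2+c^+2)^+2.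

Lemma le_eq2 {x y x' y' : C} : x <= y -> x = x' -> y = y' -> x' <= y'.
Proof. by move=> h <- <-. Qed.

Lemma Psym1 a b c : Pz a b c -> Pz b a c.
Proof. by move=> H; apply: (le_eq2 H); [rewrite (distrC (b^+2) (a^+2)); ring | ring]. Qed.
Lemma Psym2 a b c : Pz a b c -> Pz a c b.
Proof. by move=> H; apply: (le_eq2 H); [rewrite (distrC (c^+2) (b^+2)); ring | ring]. Qed.

Lemma sqr_real_ge0 (x : C) : x \is Num.real -> 0 <= x ^+ 2.
Proof. by move=> h; rewrite -real_normK // exprn_ge0. Qed.

Lemma Pcore x y z : 0 <= x -> 0 <= y -> 0 <= z -> Pz (z+y+x) (z+y) z.
Proof.
move=> hx hy hz; rewrite /Pz.
have h2 : 0 <= 2%:R :> C by rewrite ler0n.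
rewrite (ger0_norm (_ : 0 <= (z+y+x)^+2 - (z+y)^+2)); last first.
  have -> : (z+y+x)^+2 - (z+y)^+2 = x * (2%:R*z+2%:R*y+x) by ring.
  by rewrite mulr_ge0 // !addr_ge0 // mulr_ge0.
rewrite (ger0_norm (_ : 0 <= (z+y+x)^+2 - z^+2)); last first.
  have -> : (z+y+x)^+2 - z^+2 = (y+x) * (2%:R*z+y+x) by ring.
  by rewrite mulr_ge0 // !addr_ge0 // mulr_ge0.
rewrite (ger0_norm (_ : 0 <= (z+y)^+2 - z^+2)); last first.
  have -> : (z+y)^+2 - z^+2 = y * (2%:R*z+y) by ring.
  by rewrite mulr_ge0 // !addr_ge0 // mulr_ge0.
rewrite -subr_ge0.
have -> : 4 * ((z + y + x) ^+ 2 + (z + y) ^+ 2 + z ^+ 2) ^+ 2 -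
  (4 * ((z + y + x) * (z + y) + (z + y + x) * z + (z + y) * z) ^+ 2 +
   ((z + y + x) ^+ 2 - (z + y) ^+ 2 + ((z + y + x) ^+ 2 - z ^+ 2) +
    ((z + y) ^+ 2 - z ^+ 2)) ^+ 2) =
  4 * (z^+2 * (x^+2 + y^+2 + (x-y)^+2) + 4 * y^+3 * z + 2%:R * y^+4 + 2%:R * x * y^+3 + x^+2 * y^+2) by ring.
have hxy : 0 <= (x - y)^+2 by apply: sqr_real_ge0; apply: rpredB; apply: ger0_real.
by rewrite mulr_ge0 // !addr_ge0 // ?mulr_ge0 // ?exprn_ge0 // ?addr_ge0 // ?exprn_ge0.
Qed.

Lemma Pord a b c : 0 <= c -> c <= b -> b <= a -> Pz a b c.
Proof.
move=> hc hcb hba.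
have := Pcore (a - b) (b - c) c; rewrite !subr_ge0 => /(_ hba hcb hc).
have e1 : c + (b - c) + (a - b) = a by ring.
have e2 : c + (b - c) = b by ring.
by rewrite e1 e2.
Qed.

Lemma Pall a b c : 0 <= a -> 0 <= b -> 0 <= c -> Pz a b c.
Proof.
move=> ha hb hc.
have R (x : C) : 0 <= x -> x \is Num.real by apply: ger0_real.
have main (x y z : C) : 0 <= x -> 0 <= y -> 0 <= z -> y <= x -> Pz x y z.
  move=> hx hy hz hyx.
  case/orP: (real_leVge (R _ hz) (R _ hy)) => hzy; first exact: Pord.
  case/orP: (real_leVge (R _ hz) (R _ hx)) => hzx.
    by apply: Psym2; apply: Pord.
  by apply: Psym2; apply: Psym1; apply: Pord.
case/orP: (real_leVge (R _ hb) (R _ ha)) => hab; first exact: main.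
by apply: Psym1; apply: main.
Qed.
Lemma uw_norm (p : C) : `|p + p^*|^+2 + `|'i * p - 'i * p^* |^+2 = 4 * (p * p^* ).
Proof.
rewrite !normCK !rmorphD !rmorphN !rmorphM /= conjCK conjCi.
apply: (eq_i ((p - p^* )^+2)); ring.
Qed.

Lemma cs {u w u' w' m m' : C} : 0 <= u -> 0 <= w -> 0 <= u' -> 0 <= w' -> 0 <= m -> 0 <= m' ->
  u^+2 + w^+2 <= m^+2 -> u'^+2 + w'^+2 <= m'^+2 -> u * u' + w * w' <= m * m'.
Proof.
move=> hu hw hu' hw' hm hm' h h'.
rewrite -ler_sqr ?nnegrE ?addr_ge0 ?mulr_ge0 //.
apply: (le_trans (y := (u^+2 + w^+2) * (u'^+2 + w'^+2))).
  rewrite -subr_ge0.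
  have -> : (u ^+ 2 + w ^+ 2) * (u' ^+ 2 + w' ^+ 2) - (u * u' + w * w') ^+ 2 = (u * w' - w * u')^+2 by ring.
  by apply: sqr_real_ge0; apply: rpredB; apply: rpredM; apply: ger0_real.
rewrite exprMn; apply: ler_pM => //; apply: addr_ge0; apply: exprn_ge0 => //.
Qed.

Lemma sum_uw {u1 u2 u3 w1 w2 w3 m1 m2 m3 : C} :
  0 <= u1 -> 0 <= u2 -> 0 <= u3 -> 0 <= w1 -> 0 <= w2 -> 0 <= w3 ->
  0 <= m1 -> 0 <= m2 -> 0 <= m3 ->
  u1^+2 + w1^+2 <= m1^+2 -> u2^+2 + w2^+2 <= m2^+2 -> u3^+2 + w3^+2 <= m3^+2 ->
  (u1+u2+u3)^+2 + (w1+w2+w3)^+2 <= (m1+m2+m3)^+2.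
Proof.
move=> hu1 hu2 hu3 hw1 hw2 hw3 hm1 hm2 hm3 h1 h2 h3.
have c12 := cs hu1 hw1 hu2 hw2 hm1 hm2 h1 h2.
have c13 := cs hu1 hw1 hu3 hw3 hm1 hm3 h1 h3.
have c23 := cs hu2 hw2 hu3 hw3 hm2 hm3 h2 h3.
have -> : (u1+u2+u3)^+2 + (w1+w2+w3)^+2 = (u1^+2 + w1^+2) + (u2^+2 + w2^+2) + (u3^+2 + w3^+2)
   + 2%:R * ((u1*u2 + w1*w2) + (u1*u3+w1*w3) + (u2*u3+w2*w3)) by ring.
have -> : (m1+m2+m3)^+2 = m1^+2 + m2^+2 + m3^+2 + 2%:R * (m1 * m2 + m1 * m3 + m2 * m3) by ring.
apply: lerD; first by apply: lerD => //; apply: lerD.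
apply: ler_wpM2l; first by rewrite ler0n.
by apply: lerD => //; apply: lerD.
Qed.
Definition SX (M : 'M[C]_3) := \sum_(i < 3) `|\tr (M *m Xop C i)|.
Definition SY (M : 'M[C]_3) := \sum_(i < 3) `|\tr (M *m Yop C i)|.
Definition SZ (M : 'M[C]_3) := \sum_(i < 3) `|\tr (M *m Zop C i)|.

Lemma mbound {p d d' : C} : 0 <= d -> 0 <= d' -> p * p^* <= d * d' ->
  `|p + p^*|^+2 + `|'i * p - 'i * p^* |^+2 <= (2%:R * sqrtC d * sqrtC d')^+2.
Proof.
move=> hd hd' h; rewrite uw_norm.
have -> : (2%:R * sqrtC d * sqrtC d')^+2 = 4 * (sqrtC d ^+2 * sqrtC d' ^+2) by ring.
by rewrite !sqrtCK; apply: ler_wpM2l.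
Qed.

Lemma state_bound (M : 'M[C]_3) : is_state M -> SX M ^+2 + SY M ^+2 + SZ M ^+2 <= 4.
Proof.
case=> hpsd htr.
have [h0 h1 e01 n01] := @herm2 _ _ _ _ (fun x y => psd01 M x y hpsd).
have [_ h2 e02 n02] := @herm2 _ _ _ _ (fun x y => psd02 M x y hpsd).
have [_ _ e12 n12] := @herm2 _ _ _ _ (fun x y => psd12 M x y hpsd).
rewrite /SX /SY /SZ !sum3 trX0 trX1 trX2 trY0 trY1 trY2 trZ0 trZ1 trZ2 e01 e02 e12.
move: htr; rewrite /mxtrace sum3 => htr.
have hs0 : 0 <= sqrtC (M o0 o0) by rewrite sqrtC_ge0.
have hs1 : 0 <= sqrtC (M o1 o1) by rewrite sqrtC_ge0.
have hs2 : 0 <= sqrtC (M o2 o2) by rewrite sqrtC_ge0.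
have h2n : 0 <= 2%:R :> C by rewrite ler0n.
have := sum_uw (normr_ge0 _) (normr_ge0 _) (normr_ge0 _) (normr_ge0 _) (normr_ge0 _) (normr_ge0 _)
  (mulr_ge0 (mulr_ge0 h2n hs1) hs2) (mulr_ge0 (mulr_ge0 h2n hs0) hs2) (mulr_ge0 (mulr_ge0 h2n hs0) hs1)
  (mbound h1 h2 n12) (mbound h0 h2 n02) (mbound h0 h1 n01).
move/(fun h => lerD h (lexx ((`|M o1 o1 - M o2 o2| + `|M o0 o0 - M o2 o2| + `|M o0 o0 - M o1 o1|)^+2))).
move/le_trans; apply.
apply: (le_eq2 (Pall _ _ _ hs0 hs1 hs2)).
  by rewrite !sqrtCK; ring.
by rewrite !sqrtCK htr; ring.
Qed.
Lemma eq_le' {x y : C} : x = y -> x <= y.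
Proof. by move->. Qed.

Lemma prod_bound (a1 a2 a3 b1 b2 b3 : C) : 0 <= a1 -> 0 <= a2 -> 0 <= a3 ->
  0 <= b1 -> 0 <= b2 -> 0 <= b3 ->
  a1^+2 + a2^+2 + a3^+2 <= 4 -> b1^+2 + b2^+2 + b3^+2 <= 4 ->
  a1 * b1 + a2 * b2 + a3 * b3 <= 4.
Proof.
move=> ha1 ha2 ha3 hb1 hb2 hb3 ha hb.
have r (x y : C) : 0 <= x -> 0 <= y -> 0 <= (x - y)^+2.
  by move=> hx hy; apply: sqr_real_ge0; apply: rpredB; apply: ger0_real.
have h2 : 0 < 2%:R :> C by rewrite ltr0n.
rewrite -(ler_pM2l h2).
have -> : 2%:R * (a1 * b1 + a2 * b2 + a3 * b3) =
  (a1^+2 + a2^+2 + a3^+2) + (b1^+2 + b2^+2 + b3^+2) - ((a1-b1)^+2 + (a2-b2)^+2 + (a3-b3)^+2) by ring.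
have -> : 2%:R * 4 = 4 + 4 :> C by ring.
rewrite lerBlDr; apply: ler_wpDr; first by rewrite !addr_ge0 ?r.
exact: lerD.
Qed.
End S.

Lemma tr_tens (C : numClosedFieldType) m n (A : 'M[C]_m) (B : 'M[C]_n) : \tr (A *t B) = \tr A * \tr B.
Proof. by rewrite /mxtrace mxtens.mulr_sum; apply: eq_bigr => i _; rewrite mxE. Qed.

Lemma tr_sep (C : numClosedFieldType) N (p : 'I_N -> C) (rA rB : 'I_N -> 'M[C]_3) (P Q : 'M[C]_3) :
  \tr ((\sum_(k < N) p k *: tensmx (rA k) (rB k)) *m tensmx P Q)
  = \sum_(k < N) p k * (\tr (rA k *m P) * \tr (rB k *m Q)).
Proof.
rewrite mulmx_suml raddf_sum; apply: eq_bigr => k _.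
rewrite -scalemxAl; change (\tr (p k *: (tensmx (rA k) (rB k) *m tensmx P Q)) = p k * (\tr (rA k *m P) * \tr (rB k *m Q))).
by rewrite mxtraceZ tensmx_mul tr_tens.
Qed.

Theorem mainTheorem17 (C : numClosedFieldType) (rho : 'M[C]_(3 * 3)) :
  separable rho ->
  \sum_(i < 3) \sum_(j < 3)
     (`| \tr (rho *m tensmx (Xop C i) (Xop C j)) |
      + `| \tr (rho *m tensmx (Yop C i) (Yop C j)) |
      + `| \tr (rho *m tensmx (Zop C i) (Zop C j)) |) <= 4.
Proof.
move=> [N [p [rA [rB [hp [hsum [hA [hB ->]]]]]]]].
have bound (P Q : 'M[C]_3) : `|\tr ((\sum_(k < N) p k *: tensmx (rA k) (rB k)) *m tensmx P Q)|
   <= \sum_(k < N) p k * (`|\tr (rA k *m P)| * `|\tr (rB k *m Q)|).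
  rewrite tr_sep; apply: le_trans (ler_norm_sum _ _ _) _; apply: ler_sum => k _.
  by rewrite !normrM (ger0_norm (hp k)).
apply: (le_trans (y := \sum_(i < 3) \sum_(j < 3) \sum_(k < N) p k *
   (`|\tr (rA k *m Xop C i)| * `|\tr (rB k *m Xop C j)|
  + `|\tr (rA k *m Yop C i)| * `|\tr (rB k *m Yop C j)|
  + `|\tr (rA k *m Zop C i)| * `|\tr (rB k *m Zop C j)|))).
  apply: ler_sum => i _; apply: ler_sum => j _.
  apply: le_trans (lerD (lerD (bound _ _) (bound _ _)) (bound _ _)) _.
  by apply: eq_le'; rewrite -!big_split; apply: eq_bigr => k _; rewrite /= !mulrDr.
apply: (le_trans (y := \sum_(k < N) p k * 4)); last first.
  by rewrite -mulr_suml hsum mul1r.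
apply: (le_trans (y := \sum_(k < N) p k * (SX C (rA k) * SX C (rB k) + SY C (rA k) * SY C (rB k) + SZ C (rA k) * SZ C (rB k)))).
  apply: eq_le'.
  under eq_bigr => i _ do rewrite exchange_big.
  rewrite exchange_big; apply: eq_bigr => k _.
  by rewrite /SX /SY /SZ !sum3; ring.
apply: ler_sum => k _; apply: ler_wpM2l; first exact: hp.
have g (F : 'I_3 -> C) : 0 <= \sum_(i < 3) `|F i| by apply: sumr_ge0 => i _; apply: normr_ge0.
by apply: prod_bound; rewrite ?g //; apply: state_bound.
Qed.
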